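(* Let $q\in\mathbb{C}^\times$ be not a root of unity, $k\in\mathbb{Z}_{>0}$, $\mathbf{x}=(x_1,\dots,x_k)$, $t\in\mathbb{Z}_{>0}$ and $Q,\beta\in\mathbb{C}^\times$, $\tilde\beta=(q-q^{-1})^{-1}(1-\beta^{-2})$. Then: (i) $p^{\langle Q\rangle}_t(q;\beta)(\mathbf{x})=(-1)^{t-1}q^{-t}[t]e_t(\mathbf{x})+\tilde\beta Q^{-t}+\sum_{z=1}^{t-1}(-1)^{t-z+1}\big(p^{\langle Q\rangle}_z(q;\beta)(\mathbf{x})-q^{-2(t-z)}\tilde\beta Q^{-z}\big)e_{t-z}(\mathbf{x})$; (ii) $p^{\langle Q\rangle}_{k+t}(q;\beta)(\mathbf{x})=Q^{-1}p^{\langle Q\rangle}_{k+t-1}(q;\beta)(\mathbf{x})+\sum_{z=0}^{k-1}(-1)^{k-z+1}\big(p^{\langle Q\rangle}_{t+z}(q;\beta)(\mathbf{x})-Q^{-1}p^{\langle Q\rangle}_{t+z-1}(q;\beta)(\mathbf{x})\big)e_{k-z}(\mathbf{x})$, where $p^{\langle Q\rangle}_0(q;\beta)(\mathbf{x}):=\frac{1-(\beta q^k)^{-2}}{q-q^{-1}}$.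
   Context: $[t]=(q^t-q^{-t})/(q-q^{-1})$. $e_t$ is the elementary symmetric polynomial ($e_0=1$). For $t>0$, $p_t(q)(\mathbf{x})=\sum_{\lambda\vdash t,\ \ell(\lambda)\le k}q^{-\ell(\lambda)}(q-q^{-1})^{\ell(\lambda)-1}m_\lambda(\mathbf{x})$ ($\lambda$ partitions of $t$ with at most $k$ nonzero parts, $m_\lambda$ monomial symmetric polynomial), and $p^{\langle Q\rangle}_t(q;\beta)(\mathbf{x})=p_t(q)(\mathbf{x})+\tilde\beta Q^{-t}+(q-q^{-1})\sum_{z=1}^{t-1}\tilde\beta Q^{-t+z}p_z(q)(\mathbf{x})$. *)

(* Defs.v *)
From HB Require Import structures.
From mathcomp Require Import all_boot all_order all_algebra.
From mathcomp Require Import complex.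
From mathcomp Require Import Rstruct.
Set Implicit Arguments. Unset Strict Implicit. Unset Printing Implicit Defensive.
Import Order.TTheory GRing.Theory Num.Theory.
Local Open Scope ring_scope.

Definition CC : Type := (Rdefinitions.R)[i].
Definition CC_fieldType : fieldType := (Rdefinitions.R)[i].

Section Defs.
Variable C : fieldType.

Definition qint (q : C) (t : nat) : C := (q ^+ t - q ^- t) / (q - q^-1).

Definition elem_sym (k : nat) (t : nat) (x : 'I_k -> C) : C :=
  \sum_(A : {set 'I_k} | #|A| == t) \prod_(i in A) x i.

Definition expvec (k t : nat) := {ffun 'I_k -> 'I_t.+1}.

Definition shape (k t : nat) (a : expvec k t) : seq nat :=
  sort geq [seq val (a i) | i <- enum 'I_k & val (a i) != 0%N].

Definition partitions_le (k t : nat) : seq (seq nat) :=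
  [seq l <- undup [seq shape a | a <- enum {: expvec k t}] | sumn l == t].

Definition msym (k t : nat) (l : seq nat) (x : 'I_k -> C) : C :=
  \sum_(a : expvec k t | shape a == l) \prod_(i < k) x i ^+ val (a i).

Definition pq (q : C) (k t : nat) (x : 'I_k -> C) : C :=
  \sum_(l <- partitions_le k t)
     q ^- (size l) * (q - q^-1) ^+ (size l).-1 * msym t l x.

Definition btilde (q beta : C) : C := (q - q^-1)^-1 * (1 - beta ^- 2).

(* p^<Q>_t(q;beta)(x), with the convention for t = 0 from part (ii) *)
Definition pQ (q beta Q : C) (k t : nat) (x : 'I_k -> C) : C :=
  if t == 0%N then (1 - (beta * q ^+ k) ^- 2) / (q - q^-1)
  else pq q t x + btilde q beta * Q ^- t
       + (q - q^-1) * \sum_(1 <= z < t) btilde q beta * Q ^- (t - z) * pq q z x.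

End Defs.

(* Main.v *)
Require Import Defs.
From HB Require Import structures.
From mathcomp Require Import all_boot all_order all_algebra.
From mathcomp Require Import complex.
From mathcomp Require Import Rstruct.
From mathcomp Require Import ring lra zify.
Import Order.TTheory GRing.Theory Num.Theory.
Local Open Scope ring_scope.

Module Helpers.
Set Implicit Arguments. Unset Strict Implicit.


Section Gen.
Variable F : fieldType.

Definition cong (n : nat) (p p' : {poly F}) := forall i, (i < n)%N -> p`_i = p'`_i.

Lemma cong_refl n p : cong n p p.
Proof. by []. Qed.

Lemma cong_mul n p p' s s' : cong n p p' -> cong n s s' -> cong n (p * s) (p' * s').
Proof.
move=> h1 h2 i lt; rewrite !coefM; apply: eq_bigr => j _.
have := ltn_ord j => hj.
by rewrite h1 ?h2 //; lia.
Qed.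

Lemma cong_prod n k (f g : 'I_k -> {poly F}) :
  (forall i, cong n (f i) (g i)) -> cong n (\prod_i f i) (\prod_i g i).
Proof.
move=> h; apply: (big_ind2 (cong n)) => //.
  by move=> *; apply: cong_mul.
Qed.

Definition cf (s : F) (n : nat) : F := if (n != 0)%N then s else 1.
Definition ser (s y : F) (N : nat) : {poly F} := \poly_(n < N.+1) (cf s n * y ^+ n).

Lemma ser_fact s y N :
  cong N.+1 ((1 + (- y)%:P * 'X) * ser s y N) (1 + (- ((1 - s) * y))%:P * 'X).
Proof.
move=> i lt.
rewrite mulrDl mul1r -mulrA coefD coefCM coefXM coefD coef1 coefCM coefX !coef_poly.
case: i lt => [|[|i]] lt /=.
  by rewrite /cf /= expr0; ring.
  by rewrite lt /cf /= expr1 expr0; ring.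
  by rewrite lt (ltnW lt) /cf /= exprS; ring.
Qed.

Lemma ser_trunc s y N m : (m <= N)%N -> cong m.+1 (ser s y N) (ser s y m).
Proof.
move=> hm i lt; rewrite !coef_poly lt.
by have -> : (i < N.+1)%N by lia.
Qed.

Lemma ser0 s y : ser s y 0 = 1.
Proof. by rewrite /ser poly_def big_ord1 /cf /= expr0 mulr1 scale1r expr0. Qed.

Lemma coef_prod_lin k (y : 'I_k -> F) m :
  (\prod_i (1 + (y i)%:P * 'X))`_m
  = \sum_(A : {set 'I_k} | #|A| == m) \prod_(i in A) y i.
Proof.
under eq_bigr do rewrite addrC.
rewrite bigA_distr coef_sum [RHS]big_mkcond /=.
apply: eq_bigr => A _.
rewrite -big_mkcond /= big_split /= -rmorph_prod prodr_const coefCM coefXn.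
by rewrite eq_sym; case: eqP => _; rewrite ?mulr1 ?mulr0.
Qed.

Lemma elem_scale k (c : F) (y : 'I_k -> F) m :
  \sum_(A : {set 'I_k} | #|A| == m) \prod_(i in A) (c * y i) = c ^+ m * elem_sym m y.
Proof.
rewrite /elem_sym mulr_sumr; apply: eq_bigr => A /eqP <-.
by rewrite big_split /= prodr_const.
Qed.

Lemma elem_sym_big k (y : 'I_k -> F) m : (k < m)%N -> elem_sym m y = 0.
Proof.
move=> lt; rewrite /elem_sym big_pred0 // => A.
apply/negbTE/eqP => e; have := max_card (mem A); rewrite card_ord.
rewrite -/(#|A|) e; lia.
Qed.

Lemma elem_sym0 k (y : 'I_k -> F) : elem_sym 0 y = 1.
Proof.
rewrite /elem_sym (big_pred1 set0) ?big_set0 // => A.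
by rewrite /= cards_eq0.
Qed.

Lemma coef_prod_ser k (f : nat -> F) (y : 'I_k -> F) N m :
  (\prod_i \poly_(n < N.+1) (f n * y i ^+ n))`_m
  = \sum_(a : {ffun 'I_k -> 'I_N.+1} | (\sum_i val (a i) == m)%N)
      \prod_i (f (a i) * y i ^+ a i).
Proof.
under eq_bigr do rewrite poly_def.
rewrite bigA_distr_bigA coef_sum [RHS]big_mkcond /=.
apply: eq_bigr => a _.
rewrite scaler_prod prodrXr coefZ coefXn eq_sym.
by case: eqP => _; rewrite ?mulr1 ?mulr0.
Qed.

End Gen.
Arguments cf {F}. Arguments ser {F}. Arguments cong {F}.


Section Gen2.
Variable F : fieldType.

Lemma sum_if_seq (T : eqType) (L : seq T) (v : T) (c : F) :
  uniq L -> \sum_(l <- L) (if v == l then c else 0) = if v \in L then c else 0.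
Proof.
elim: L => [|h L IH] /=; first by rewrite big_nil.
move/andP=> [hn hu]; rewrite big_cons IH // in_cons.
case: (eqVneq v h) => [->|ne] /=; last by rewrite add0r.
by rewrite (negbTE hn) addr0.
Qed.

Lemma prod_cf_count (T : Type) (s : seq T) (g : T -> nat) (r : F) :
  \prod_(i <- s) cf r (g i) = r ^+ count (fun i => g i != 0%N) s.
Proof.
elim: s => [|h s IH]; first by rewrite big_nil.
rewrite big_cons IH /cf /=.
by case: (g h != 0%N); rewrite ?exprS ?mul1r ?add0n.
Qed.

Lemma pq_coef (q : F) k (y : 'I_k -> F) m : (0 < m)%N ->
  (q - q^-1) * pq q m y = (\prod_i ser (q^-1 * (q - q^-1)) (y i) m)`_m.
Proof.
move=> m0.
rewrite /ser coef_prod_ser /pq mulr_sumr.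
transitivity (\sum_(l <- partitions_le k m) \sum_(a : expvec k m)
  (if Defs.shape a == l then (q - q^-1) * (q ^- size (Defs.shape a) * (q - q^-1) ^+ (size (Defs.shape a)).-1)
      * \prod_i y i ^+ a i else 0)).
  apply: eq_bigr => l _; rewrite /msym !mulr_sumr big_mkcond /=; apply: eq_bigr => a _.
  by case: eqP => [->|_]; rewrite ?mulrA.
rewrite exchange_big /= [RHS]big_mkcond /=; apply: eq_bigr => a _.
rewrite sum_if_seq; last by rewrite filter_uniq // undup_uniq.
have hsum : sumn (Defs.shape a) = (\sum_i val (a i))%N.
  rewrite (perm_sumn (permEl (perm_sort _ _))) sumnE big_map big_filter.
  rewrite big_mkcond enumT /=; apply: eq_bigr => i _; by case: eqP.
have hin : (Defs.shape a \in partitions_le k m) = (\sum_i val (a i) == m)%N.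
  by rewrite mem_filter mem_undup map_f ?mem_enum // andbT hsum.
rewrite hin; case: eqP => // hm.
rewrite big_split /=.
have hsz : size (Defs.shape a) = count (fun i => val (a i) != 0%N) (enum 'I_k).
  by rewrite size_sort size_map size_filter.
have -> : \prod_i cf (q^-1 * (q - q^-1)) (a i) = (q^-1 * (q - q^-1)) ^+ size (Defs.shape a).
  by rewrite hsz -prod_cf_count enumT.
move: hsum; rewrite hm; case: (Defs.shape a) => [|h l] /=; first by move=> e; rewrite -e in m0.
move=> _; rewrite -exprVn exprMn !exprS; ring.
Qed.

End Gen2.


Section Main.
Variable F : fieldType.

Lemma split3 (f : nat -> F) t : (0 < t)%N ->
  \sum_(j < t.+1) f j = f 0%N + \sum_(1 <= j < t) f j + f t.
Proof.
move=> t0; rewrite -(big_mkord xpredT) big_nat_recr //= big_ltn //.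
Qed.

Lemma shift_sum (f : nat -> F) t k :
  \sum_(t <= j < t + k) f j = \sum_(0 <= z < k) f (t + z)%N.
Proof.
elim: k => [|k IH]; first by rewrite addn0 !big_geq.
by rewrite addnS !big_nat_recr //= ?IH // leq_addr.
Qed.

Variables (q beta Q : F) (k t : nat) (x : 'I_k -> F).
Hypotheses (hq0 : q != 0) (hd : q - q^-1 != 0) (ht : (0 < t)%N) (hQ : Q != 0) (hb : beta != 0).

Let d := q - q^-1.
Let r := q^-1 * d.
Let N := (k + t).+1.
Let P := \prod_i ser r (x i) N.
Let E := \prod_i (1 + (- x i)%:P * 'X).
Let E' := \prod_i (1 + (- ((1 - r) * x i))%:P * 'X).
Let c := d * btilde q beta.
Let S := ser c (Q^-1) N.
Let Y := P * S.

Lemma hEP : cong N.+1 (E * P) E'.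
Proof. rewrite /E /P -big_split; apply: cong_prod => i; exact: ser_fact. Qed.

Lemma coefE m : E`_m = (-1) ^+ m * elem_sym m x.
Proof.
rewrite coef_prod_lin -elem_scale; apply: eq_bigr => A _; apply: eq_bigr => i _.
by rewrite mulN1r.
Qed.

Lemma coefE' m : E'`_m = (- (1 - r)) ^+ m * elem_sym m x.
Proof.
rewrite coef_prod_lin -elem_scale; apply: eq_bigr => A _; apply: eq_bigr => i _.
by rewrite mulNr.
Qed.

Lemma coefP m : (0 < m)%N -> (m <= N)%N -> P`_m = d * pq q m x.
Proof.
move=> m0 mN; rewrite pq_coef //.
by rewrite /P; exact: (cong_prod (fun i => ser_trunc r (x i) mN) (ltnSn m)).
Qed.

Lemma coefP0 : P`_0 = 1.
Proof.
rewrite (cong_prod (fun i => ser_trunc r (x i) (leq0n N))) //.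
under eq_bigr do rewrite ser0.
by rewrite big1_eq coef1.
Qed.

Lemma coefS m : S`_m = if (m < N.+1)%N then cf c m * Q^-1 ^+ m else 0.
Proof. by rewrite coef_poly. Qed.

Lemma coefY0 : Y`_0 = 1.
Proof. by rewrite coef0M coefP0 coefS /cf /= expr0 !mul1r. Qed.

Lemma coefY m : (0 < m)%N -> (m <= N)%N -> Y`_m = d * pQ q beta Q m x.
Proof.
move=> m0 mN.
rewrite coefM (split3 (fun j => P`_j * S`_(m - j))) //.
rewrite coefP0 coefP // subn0 subnn coefS (coefS 0) /=.
have -> : (m < N.+1)%N by lia.
rewrite /cf /= expr0 mulr1 -(prednK m0) /= prednK // /pQ.
have -> : (m == 0%N) = false by lia.
have -> : \sum_(1 <= j < m) P`_j * S`_(m - j)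
   = d * (d * \sum_(1 <= z < m) btilde q beta * Q ^- (m - z) * pq q z x).
  rewrite !mulr_sumr; apply: eq_big_nat => j hj.
  rewrite coefP; [|lia|lia]; rewrite coefS.
  have -> : (m - j < N.+1)%N by lia.
  rewrite /cf ifT; [|lia].
  by rewrite exprVn /c; ring.
by rewrite exprVn /c /d; ring.
Qed.


Lemma hr n : (1 - r) ^+ n = q ^- (2 * n).
Proof.
have e : 1 - r = q^-1 ^+ 2 by rewrite /r /d expr2; field.
by rewrite e -exprM exprVn.
Qed.

Lemma solve_lin (a s X u b : F) : a + s + X * u = b -> u = 1 -> X = b - a - s.
Proof. by move=> <- ->; ring. Qed.

Lemma partI : pQ q beta Q t x =
    (-1) ^+ (t - 1) * q ^- t * qint q t * elem_sym t x + btilde q beta * Q ^- t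
    + \sum_(1 <= z < t) (-1) ^+ (t - z + 1)
        * (pQ q beta Q z x - q ^- (2 * (t - z)) * btilde q beta * Q ^- z)
        * elem_sym (t - z) x.
Proof.
have key : (Y * E)`_t = (S * E')`_t.
  rewrite [Y * E]mulrC [S * E']mulrC /Y mulrA.
  by apply: (cong_mul hEP (cong_refl S)); rewrite /N; lia.
rewrite !coefM (split3 (fun j => Y`_j * E`_(t - j))) //
  (split3 (fun j => S`_j * E'`_(t - j))) // in key.
have m1 : \sum_(1 <= j < t) Y`_j * E`_(t - j)
   = \sum_(1 <= j < t) (d * pQ q beta Q j x) * ((-1) ^+ (t - j) * elem_sym (t - j) x).
  by apply: eq_big_nat => j hj; rewrite coefY ?coefE //; rewrite /N; lia.
have m2 : \sum_(1 <= j < t) S`_j * E'`_(t - j)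
   = \sum_(1 <= j < t) (c * Q ^- j) * ((- (1 - r)) ^+ (t - j) * elem_sym (t - j) x).
  apply: eq_big_nat => j hj; rewrite coefS coefE' ifT; [|rewrite /N; lia].
  by rewrite /cf ifT ?exprVn //; lia.
have s0 : S`_0 = 1 by rewrite coefS /cf /= expr0 mulr1.
have st : S`_t = c * Q ^- t.
  by rewrite coefS ifT ?exprVn /cf ?ifT //; rewrite /N; lia.
have yt : Y`_t = d * pQ q beta Q t x by rewrite coefY //; rewrite /N; lia.
rewrite m1 m2 s0 st yt coefY0 subn0 subnn in key.
apply: (mulfI hd).
have hT : d * \sum_(1 <= z < t) (-1) ^+ (t - z + 1)
        * (pQ q beta Q z x - q ^- (2 * (t - z)) * btilde q beta * Q ^- z)
        * elem_sym (t - z) x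
   = \sum_(1 <= j < t) (c * Q ^- j) * ((- (1 - r)) ^+ (t - j) * elem_sym (t - j) x)
     - \sum_(1 <= j < t) (d * pQ q beta Q j x) * ((-1) ^+ (t - j) * elem_sym (t - j) x).
  rewrite mulr_sumr -sumrB; apply: eq_big_nat => z hz.
  by rewrite (exprNn (1 - r)) hr addn1 exprS /c; ring.
rewrite 2!mulrDr hT (solve_lin key); last by rewrite coefE expr0 elem_sym0 mulr1.
rewrite !coefE' !coefE !expr0 elem_sym0 (exprNn (1 - r)) hr.
have -> : (-1) ^+ t = - (-1) ^+ (t - 1) :> F.
  by rewrite -{1}(subnK ht) exprD expr1 mulrN1.
rewrite /qint -/d mul2n -addnn exprD.
have qt : q ^+ t != 0 by rewrite expf_neq0.
rewrite /c; field; by rewrite qt hd expf_neq0.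
Qed.


Lemma partII : pQ q beta Q (k + t) x =
    Q^-1 * pQ q beta Q (k + t - 1) x
    + \sum_(0 <= z < k) (-1) ^+ (k - z + 1)
        * (pQ q beta Q (t + z) x - Q^-1 * pQ q beta Q (t + z - 1) x)
        * elem_sym (k - z) x.
Proof.
pose L : {poly F} := 1 + (- Q^-1)%:P * 'X.
pose B := L * Y.
have coefB j : (0 < j)%N -> (j <= N)%N -> B`_j = d * pQ q beta Q j x
     - Q^-1 * (if j == 1%N then 1 else d * pQ q beta Q j.-1 x).
  move=> j0 jN; rewrite /B /L mulrDl mul1r -mulrA coefD coefCM coefXM.
  have -> : (j == 0%N) = false by lia.
  rewrite coefY //; case: eqP => [->|j1]; first by rewrite coefY0; ring.
  rewrite coefY; [ring|lia|lia].
have key : (B * E)`_(k + t) = (E' * (1 + (- ((1 - c) * Q^-1))%:P * 'X))`_(k + t).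
  have -> : B * E = (E * P) * (L * S) by rewrite /B /Y; ring.
  by apply: (cong_mul hEP (@ser_fact F c Q^-1 N)); rewrite /N; lia.
rewrite mulrDr mulr1 mulrCA coefD coefCM coefMX in key.
have e0 : elem_sym (k + t) x = 0 by apply: elem_sym_big; lia.
rewrite (_ : (k + t == 0)%N = false) in key; last by lia.
rewrite coefE' e0 mulr0 add0r in key.
have L1 : (B * E)`_(k + t) = \sum_(0 <= z < k.+1) B`_(t + z) * E`_(k - z).
  rewrite coefM -(big_mkord xpredT (fun j => B`_j * E`_(k + t - j))).
  rewrite (@big_cat_nat _ _ _ t) //=; last by lia.
  rewrite big_nat_cond big1 ?add0r; last first.
    move=> j /andP[/andP[_ hj] _]; rewrite coefE elem_sym_big ?mulr0 //; lia.
  have -> : (k + t).+1 = (t + k.+1)%N by lia.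
  rewrite shift_sum; apply: eq_big_nat => z hz.
  by have -> : (k + t - (t + z) = k - z)%N by lia.
rewrite L1 in key.
have hBD z : (z <= k)%N -> (t + z != 1)%N -> B`_(t + z)
    = d * (pQ q beta Q (t + z) x - Q^-1 * pQ q beta Q (t + z - 1) x).
  move=> hz h1; rewrite coefB; [|lia|rewrite /N; lia].
  by rewrite (negbTE h1) subn1; ring.
have hsumD : \sum_(0 <= z < k.+1)
   (d * (pQ q beta Q (t + z) x - Q^-1 * pQ q beta Q (t + z - 1) x)) * E`_(k - z) = 0.
  case: (eqVneq t 1%N) => [t1|t1]; last first.
    rewrite -(eq_big_nat _ _ (F1 := fun z => B`_(t + z) * E`_(k - z))); last first.
      by move=> z hz; rewrite hBD //; lia.
    rewrite key coefE' elem_sym_big ?mulr0 //; lia.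
  rewrite big_ltn // in key; rewrite big_ltn //.
  have hs : \sum_(1 <= z < k.+1)
     (d * (pQ q beta Q (t + z) x - Q^-1 * pQ q beta Q (t + z - 1) x)) * E`_(k - z)
     = \sum_(1 <= z < k.+1) B`_(t + z) * E`_(k - z).
    by apply: eq_big_nat => z hz; rewrite hBD //; lia.
  rewrite hs.
  move: key; rewrite addrC => /(canRL (addrK _)) ->.
  rewrite t1 coefB // addn0 subnn addn1 /=.
  have pQ0 : pQ q beta Q 0 x = (1 - (beta * q ^+ k) ^- 2) / d by [].
  rewrite pQ0 coefE' coefE (exprNn (1 - r)) hr /c /btilde.
  rewrite mul2n -addnn exprD !exprMn.
  have qk : q ^+ k != 0 by rewrite expf_neq0.
  rewrite subn0 -/d !expr2; field.
  by rewrite qk hd hb hQ.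
apply: (mulfI hd).
rewrite big_nat_recr //= in hsumD.
rewrite subnn coefE expr0 elem_sym0 mulr1 (addnC t k) in hsumD.
move/eqP: hsumD; rewrite addr_eq0 => /eqP hs.
rewrite mulrDr mulr_sumr.
have -> : \sum_(0 <= z < k) d * ((-1) ^+ (k - z + 1)
        * (pQ q beta Q (t + z) x - Q^-1 * pQ q beta Q (t + z - 1) x)
        * elem_sym (k - z) x)
   = - \sum_(0 <= z < k)
   (d * (pQ q beta Q (t + z) x - Q^-1 * pQ q beta Q (t + z - 1) x)) * E`_(k - z).
  rewrite -sumrN; apply: eq_big_nat => z hz; rewrite coefE addn1 exprS; ring.
rewrite hs /d; ring.
Qed.

End Main.

End Helpers.
Import Helpers.

Theorem mainTheorem20 (q : CC_fieldType) (k : nat) (beta Q : CC_fieldType)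
    (hq0 : q != 0) (hqroot : forall n : nat, (0 < n)%N -> q ^+ n != 1)
    (hk : (0 < k)%N) (hQ : Q != 0) (hbeta : beta != 0)
    (x : 'I_k -> CC_fieldType) (t : nat) (ht : (0 < t)%N) :
  pQ q beta Q t x =
    (-1) ^+ (t - 1) * q ^- t * qint q t * elem_sym t x + btilde q beta * Q ^- t
    + \sum_(1 <= z < t) (-1) ^+ (t - z + 1)
        * (pQ q beta Q z x - q ^- (2 * (t - z)) * btilde q beta * Q ^- z)
        * elem_sym (t - z) x
  /\
  pQ q beta Q (k + t) x =
    Q^-1 * pQ q beta Q (k + t - 1) x
    + \sum_(0 <= z < k) (-1) ^+ (k - z + 1)
        * (pQ q beta Q (t + z) x - Q^-1 * pQ q beta Q (t + z - 1) x)
        * elem_sym (k - z) x.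
Proof.
have hd : q - q^-1 != 0.
  apply/eqP => h; move: (hqroot 2%N isT); rewrite expr2.
  move/eqP: h; rewrite subr_eq0 => /eqP h.
  by rewrite {2}h mulfV // eqxx.
split.
  exact: (@partI CC_fieldType q beta Q k t x hq0 hd ht hQ hbeta).
exact: (@partII CC_fieldType q beta Q k t x hq0 hd ht hQ hbeta).
Qed.
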